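(* Let $g\in\mathcal F$, $h\in[H]$, let $P$ be a probability distribution over $\mathcal F$, and let $G$ be the distribution of the function $g\circ_h f$ when $f\sim P$. Suppose that for constants $C_1,C_2,C_3$: (a) for every $f\in\operatorname{supp}(G)$, $\eta(f,g,h)>\eta(g,g,h)-C_1$; (b) $\Big|\mathbb E_{f\sim G}\mathbb E_{x'\sim\mathcal D_{f,h+1}}[V^{\pi_f}_{h+1}(x')]-\mathbb E_{f\sim G}\mathbb E_{x'\sim\mathcal D_{f,h+1}}[f(x',\pi_f(x'))]\Big|\le C_2$; (c) $\Big|\mathbb E_{x'\sim\mathcal D_{g,h+1}}[V^{\pi_g}_{h+1}(x')]-\mathbb E_{x'\sim\mathcal D_{g,h+1}}[g(x',\pi_g(x'))]\Big|\le C_3$. Then $\mathbb E_{f\sim G}[V^{\pi_f}]\ge V^{\pi_g}-(C_1+C_2+C_3)$.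
   Context: Episodic MDP with layered state space $\mathcal X=\mathcal X_1\cup\dots\cup\mathcal X_H$ (disjoint), finite action set $\mathcal A$, transitions $p(\cdot\mid x,a)$ from $\mathcal X_h$ to $\mathcal X_{h+1}$, (expected) reward $r(x,a)$, deterministic initial state $x_1\in\mathcal X_1$. $\mathcal F$ is a finite class of functions $\mathcal X\times\mathcal A\to[0,1]$. For any function $f:\mathcal X\times\mathcal A\to\mathbb R$, $\pi_f(x)=\arg\max_a f(x,a)$; $\mathcal D_{f,h}$ is the distribution of $x_h$ when $\pi_f$ is run from $x_1$; $V^\pi_h(x)$ is the expected reward-to-go from $x\in\mathcal X_h$ under $\pi$ (with $V^\pi_{H+1}\equiv0$ and all functions vanishing at layer $H+1$), and $V^\pi=V^\pi_1(x_1)$. Concatenation: $(f_1\circ_h f_2)(x,a)=f_1(x,a)$ if $x\in\mathcal X_1\cup\dots\cup\mathcal X_{h-1}$ and $=f_2(x,a)$ otherwise. Predicted performance: $\eta(f,g,h)=\mathbb E_{x\sim\mathcal D_{g,h}}\mathbb E_{x'\sim p(\cdot\mid x,\pi_f(x))}[r(x,\pi_f(x))+f(x',\pi_f(x'))]$. *)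

(* Defs.v *)
From mathcomp Require Import all_boot all_order all_algebra.
Set Implicit Arguments. Unset Strict Implicit. Unset Printing Implicit Defensive.
Import Order.TTheory GRing.Theory Num.Theory.
Local Open Scope ring_scope.

Section MDP.
Variables (R : realFieldType) (X A : finType).

Definition greedy (a0 : A) (f : X -> A -> R) (x : X) : A :=
  Order.arg_max a0 xpredT (f x).

Definition concat (lay : X -> nat) (f1 : X -> A -> R) (h : nat) (f2 : X -> A -> R)
  : X -> A -> R := fun x a => if (lay x < h)%N then f1 x a else f2 x a.

Fixpoint distk (p : X -> A -> X -> R) (x1 : X) (pi : X -> A) (k : nat) : X -> R :=
  match k with
  | O => fun x => if x == x1 then 1 else 0
  | S k' => fun x' => \sum_x distk p x1 pi k' x * p x (pi x) x'
  end.

Definition Dist p x1 pi (h : nat) : X -> R := distk p x1 pi h.-1.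

Fixpoint Vaux (p : X -> A -> X -> R) (r : X -> A -> R) (pi : X -> A) (n : nat)
  : X -> R :=
  match n with
  | O => fun _ => 0
  | S n' => fun x => r x (pi x) + \sum_x' p x (pi x) x' * Vaux p r pi n' x'
  end.

(* V^pi_h(x) for x in layer h; V^pi_{H+1} = 0 *)
Definition Vh p r (H : nat) pi (h : nat) : X -> R := Vaux p r pi (H.+1 - h).

Definition Value p r H x1 pi : R := Vh p r H pi 1 x1.

Definition Ex (D : X -> R) (phi : X -> R) : R := \sum_x D x * phi x.

Definition eta a0 p r x1 (f g : X -> A -> R) (h : nat) : R :=
  Ex (Dist p x1 (greedy a0 g) h)
     (fun x => r x (greedy a0 f x) +
        \sum_x' p x (greedy a0 f x) x' * f x' (greedy a0 f x')).

End MDP.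

(* Main.v *)
Require Import Defs.
From mathcomp Require Import all_boot all_order all_algebra.
Import Order.TTheory GRing.Theory Num.Theory.
From mathcomp Require Import ring lra.
Local Open Scope ring_scope.

Section Aux.
Variables (R : realFieldType) (X A : finType).
Variables (p : X -> A -> X -> R) (r : X -> A -> R) (x1 : X).

Lemma Ex_step (pi : X -> A) k (phi : X -> R) :
  Ex (distk p x1 pi k) (fun x => \sum_x' p x (pi x) x' * phi x') =
  Ex (distk p x1 pi k.+1) phi.
Proof.
rewrite /Ex /=; under [RHS]eq_bigr do rewrite big_distrl /=.
rewrite exchange_big; apply: eq_bigr => x _; rewrite big_distrr.
by apply: eq_bigr => x' _; rewrite /= mulrA.
Qed.

Lemma Vaux_step (pi : X -> A) k n :
  Ex (distk p x1 pi k) (Vaux p r pi n.+1) =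
  Ex (distk p x1 pi k) (fun x => r x (pi x)) + Ex (distk p x1 pi k.+1) (Vaux p r pi n).
Proof.
rewrite -Ex_step /Ex -big_split; apply: eq_bigr => x _ /=; by rewrite mulrDr.
Qed.

Lemma Value_decomp (pi : X -> A) m n :
  Vaux p r pi (m + n) x1 =
  \sum_(k < m) Ex (distk p x1 pi k) (fun x => r x (pi x)) +
  Ex (distk p x1 pi m) (Vaux p r pi n).
Proof.
elim: m n => [|m IH] n.
  rewrite big_ord0 add0r /Ex /= (bigD1 x1) //= eqxx mul1r big1 ?addr0 //.
  by move=> x /negbTE ->; rewrite mul0r.
by rewrite addSnnS IH Vaux_step big_ord_recr /= addrA.
Qed.

Variables (lay : X -> nat) (H : nat).
Hypothesis Hx1 : lay x1 = 1%N.
Hypothesis Hplay : forall x a x', (lay x <= H)%N -> p x a x' != 0 -> lay x' = (lay x).+1.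

Lemma support (pi : X -> A) k x :
  (k <= H)%N -> distk p x1 pi k x != 0 -> lay x = k.+1.
Proof.
elim: k x => [|k IH] x' Hk /=.
  by case: (x' =P x1) => [-> _|_]; [rewrite Hx1|rewrite eqxx].
move=> Hs.
have [x Hx] : exists x, distk p x1 pi k x * p x (pi x) x' != 0.
  apply/existsP; apply: contraR Hs; rewrite negb_exists => /forallP Hall.
  apply/eqP; apply: big1 => x _; move: (Hall x); by rewrite negbK => /eqP.
move: Hx; rewrite mulf_eq0 negb_or => /andP [Hd Hp].
have Hl := IH x (ltnW Hk) Hd.
by rewrite (@Hplay x (pi x)) // Hl.
Qed.

Lemma agree (pi pi' : X -> A) h k x :
  (h <= H)%N -> (forall x, (lay x < h)%N -> pi x = pi' x) -> (k < h)%N ->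
  distk p x1 pi k x = distk p x1 pi' k x.
Proof.
move=> HhH Hag; elim: k x => [|k IH] x' Hk //=.
apply: eq_bigr => x _; rewrite IH ?(ltnW Hk) //.
have [->|Hd] := eqVneq (distk p x1 pi' k x) 0; first by rewrite !mul0r.
rewrite Hag // (support _ k _ (ltnW (ltnW (leq_trans Hk HhH))) Hd).
exact: Hk.
Qed.

End Aux.

Theorem lemma12 (R : realFieldType) (X A I : finType) (a0 : A) (H : nat)
  (lay : X -> nat) (p : X -> A -> X -> R) (r : X -> A -> R) (x1 : X)
  (fam : I -> X -> A -> R) (ig : I) (h : nat) (P : I -> R) (C1 C2 C3 : R)
  (* layered structure: layers 1..H+1, layer H+1 terminal *)
  (Hlay : forall x, (1 <= lay x <= H.+1)%N)
  (Hx1 : lay x1 = 1%N)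
  (Hp0 : forall x a x', 0 <= p x a x')
  (Hp1 : forall x a, \sum_x' p x a x' = 1)
  (Hplay : forall x a x', (lay x <= H)%N -> p x a x' != 0 -> lay x' = (lay x).+1)
  (* F is a finite class of [0,1]-valued functions vanishing at layer H+1 *)
  (HF01 : forall i x a, 0 <= fam i x a <= 1)
  (HFH1 : forall i x a, lay x = H.+1 -> fam i x a = 0)
  (Hh : (1 <= h <= H)%N)
  (HP0 : forall i, 0 <= P i) (HP1 : \sum_i P i = 1) :
  let g := fam ig in
  let pi := greedy a0 in
  let EG (phi : (X -> A -> R) -> R) := \sum_i P i * phi (concat lay g h (fam i)) in
  (forall i, 0 < P i ->
     eta a0 p r x1 (concat lay g h (fam i)) g h > eta a0 p r x1 g g h - C1) ->
  `| EG (fun f => Ex (Dist p x1 (pi f) h.+1) (Vh p r H (pi f) h.+1))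
     - EG (fun f => Ex (Dist p x1 (pi f) h.+1) (fun x' => f x' (pi f x'))) | <= C2 ->
  `| Ex (Dist p x1 (pi g) h.+1) (Vh p r H (pi g) h.+1)
     - Ex (Dist p x1 (pi g) h.+1) (fun x' => g x' (pi g x')) | <= C3 ->
  EG (fun f => Value p r H x1 (pi f)) >= Value p r H x1 (pi g) - (C1 + C2 + C3).
Proof.
move=> g pi EG H1 H2 H3.
case: h Hh @EG H1 H2 H3 => [//|h'] /andP [_ HhH] EG H1 H2 H3.
set S := fun pi0 : X -> A => \sum_(k < h') Ex (distk p x1 pi0 k) (fun x => r x (pi0 x)).
set a := fun pi0 : X -> A => Ex (distk p x1 pi0 h') (fun x => r x (pi0 x)).
have decomp : forall pi0, Value p r H x1 pi0 =
   S pi0 + a pi0 + Ex (Dist p x1 pi0 h'.+2) (Vh p r H pi0 h'.+2).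
  move=> pi0; rewrite /Value /Vh subSS subn0 -{1}(subnKC HhH) Value_decomp.
  by rewrite big_ord_recr /= subSS.
have ag : forall i x, (lay x < h'.+1)%N -> pi (concat lay g h'.+1 (fam i)) x = pi g x.
  by move=> i x Hx; rewrite /pi /greedy /concat Hx.
have dag : forall i k x, (k < h'.+1)%N ->
    distk p x1 (pi (concat lay g h'.+1 (fam i))) k x = distk p x1 (pi g) k x.
  by move=> i k x Hk; apply: (@agree _ _ _ _ _ _ _ Hx1 Hplay _ _ _ _ _ HhH (ag i)).
have rag : forall i k, (k < h')%N ->
    Ex (distk p x1 (pi (concat lay g h'.+1 (fam i))) k)
       (fun x => r x (pi (concat lay g h'.+1 (fam i)) x)) =
    Ex (distk p x1 (pi g) k) (fun x => r x (pi g x)).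
  move=> i k Hk; rewrite /Ex; apply: eq_bigr => x _; rewrite dag; last by rewrite ltnS ltnW.
  have [->|Hd] := eqVneq (distk p x1 (pi g) k x) 0; first by rewrite !mul0r.
  rewrite ag // (@support _ _ _ _ _ _ _ Hx1 Hplay _ k _ (ltnW (leq_trans Hk (ltnW HhH))) Hd) ltnS // ltnW.
have Sag : forall i, S (pi (concat lay g h'.+1 (fam i))) = S (pi g).
  move=> j; rewrite /S; apply: eq_bigr => kk _; apply: rag; exact: ltn_ord.
have etaE : forall f : X -> A -> R,
    (forall x, (lay x < h'.+1)%N -> pi f x = pi g x) ->
    eta a0 p r x1 f g h'.+1 = a (pi f) +
      Ex (Dist p x1 (pi f) h'.+2) (fun x' => f x' (pi f x')).
  move=> f Hf; rewrite /eta /Dist /= /a -(@Ex_step _ _ _ _ _ (pi f)) /Ex -big_split /=.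
  apply: eq_bigr => x _.
  rewrite (@agree _ _ _ _ _ _ _ Hx1 Hplay (greedy a0 g) (pi f) _ _ _ HhH (fun x Hx => esym (Hf x Hx))) //.
  by rewrite mulrDr.
rewrite /EG.
under eq_bigr do rewrite decomp Sag.
rewrite decomp.
set b := fun f : X -> A -> R => Ex (Dist p x1 (pi f) h'.+2) (Vh p r H (pi f) h'.+2).
set c := fun f : X -> A -> R => Ex (Dist p x1 (pi f) h'.+2) (fun x' => f x' (pi f x')).
rewrite -/(b g) in H3 *; rewrite -/(c g) in H3.
have H1' : forall i, 0 < P i ->
    a (pi (concat lay g h'.+1 (fam i))) + c (concat lay g h'.+1 (fam i)) >
    a (pi g) + c g - C1.
  move=> i Hi; move: (H1 i Hi); by rewrite (etaE _ (ag i)) (etaE g (fun _ _ => erefl)).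
have Hsum : \sum_i P i * (a (pi (concat lay g h'.+1 (fam i))) + c (concat lay g h'.+1 (fam i)))
    >= a (pi g) + c g - C1.
  rewrite -[X in X <= _]mul1r -HP1 big_distrl /=; apply: ler_sum => i _.
  have [Hz|Hpos] := eqVneq (P i) 0; first by rewrite Hz !mul0r.
  have Hpi : 0 < P i by rewrite lt0r Hpos HP0.
  by rewrite ler_pM2l // ltW // H1'.
have eS : \sum_i P i * (S (pi g) + a (pi (concat lay g h'.+1 (fam i))) + b (concat lay g h'.+1 (fam i)))
   = S (pi g) + \sum_i P i * (a (pi (concat lay g h'.+1 (fam i))) + c (concat lay g h'.+1 (fam i)))
     + (\sum_i P i * b (concat lay g h'.+1 (fam i)) - \sum_i P i * c (concat lay g h'.+1 (fam i))).
  rewrite (eq_bigr (fun i => P i * S (pi g) + (P i * (a (pi (concat lay g h'.+1 (fam i))) + c (concat lay g h'.+1 (fam i)))) + (P i * b (concat lay g h'.+1 (fam i)) - P i * c (concat lay g h'.+1 (fam i))))); last by move=> i _; ring.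
  by rewrite !big_split /= sumrN -big_distrl /= HP1 mul1r.

rewrite eS.
set B := \sum_i _ * b _; set Cs := \sum_i _ * c _.
have H2' : `|B - Cs| <= C2 by exact: H2.
move: H2' H3.
move=> /ler_normlP [H2a H2b] /ler_normlP [H3a H3b].
move: Hsum; set T := \sum_i _ * _ => Hsum.
lra.
Qed.
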